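(* Let $\mathbb{F}$ be a field and let $G$ be a finite absolutely irreducible subgroup of $\mathrm{GL}(n,\mathbb{F})$ that is self-normalizing in $\mathrm{GL}(n,\mathbb{F})$ modulo scalars (i.e., $N_{\mathrm{GL}(n,\mathbb{F})}(G)=G\cdot Z$ where $Z$ is the group of scalar matrices). If $G$ has precisely $|\mathrm{Out}(G)|$ inequivalent faithful absolutely irreducible representations in $\mathrm{GL}(n,\mathbb{F})$, then every absolutely irreducible subgroup of $\mathrm{GL}(n,\mathbb{F})$ isomorphic to $G$ is $\mathrm{GL}(n,\mathbb{F})$-conjugate to $G$. *)

(* Defs.v *)
From mathcomp Require Import all_boot all_order all_algebra all_fingroup all_solvable all_character.
Set Implicit Arguments. Unset Strict Implicit. Unset Printing Implicit Defensive.
Import GRing.Theory.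
Local Open Scope ring_scope.

(* A finite subgroup of GL(n,F) isomorphic to an abstract finite group G is
   represented as the image of a faithful representation rG : G -> GL(n,F). *)

Definition in_image (F : fieldType) (gT : finGroupType) (G : {group gT}) (n : nat)
  (rG : mx_representation F G n) (A : 'M[F]_n) : Prop :=
  exists2 g, g \in G & A = rG g.

Definition faithful_abs_irr (F : fieldType) (gT : finGroupType) (G : {group gT}) (n : nat)
  (rG : mx_representation F G n) : bool :=
  mx_faithful rG && mx_absolutely_irreducible rG.

Definition self_normalizing_mod_scalars (F : fieldType) (gT : finGroupType)
  (G : {group gT}) (n : nat) (rG : mx_representation F G n) : Prop :=
  forall P : 'M[F]_n, P \in unitmx ->
    (forall A, in_image rG A <-> in_image rG (invmx P *m A *m P)) ->
    exists2 g, g \in G & exists2 c : F, c != 0 & P = rG g *m c%:M.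

Definition Inn (gT : finGroupType) (G : {group gT}) : {set {perm gT}} :=
  (conj_aut G @* G)%g.
Definition out_order (gT : finGroupType) (G : {group gT}) : nat :=
  #|Aut G : Inn G|%g.

Definition num_faithful_abs_irr_classes (F : fieldType) (gT : finGroupType)
  (G : {group gT}) (n k : nat) : Prop :=
  exists reps : 'I_k -> mx_representation F G n,
    [/\ forall i, faithful_abs_irr (reps i),
        forall i j, mx_rsim (reps i) (reps j) -> i = j
      & forall rG' : mx_representation F G n, faithful_abs_irr rG' ->
          exists i, mx_rsim rG' (reps i)].

(* Main.v *)
Require Import Defs.
From mathcomp Require Import all_boot all_order all_algebra all_fingroup all_solvable all_character.
From Stdlib Require Import ClassicalEpsilon.
Set Implicit Arguments. Unset Strict Implicit. Unset Printing Implicit Defensive.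
Import GRing.Theory.
Local Open Scope ring_scope.

Definition decb (P : Prop) : bool := if excluded_middle_informative P then true else false.
Lemma decbP P : reflect P (decb P).
Proof. by rewrite /decb; case: excluded_middle_informative => h; constructor. Qed.

Definition comp_rep (F : fieldType) (gT hT : finGroupType) (G : {group gT})
  (K : {group hT}) (f : {morphism G >-> hT}) (eqK : (K :==: f @* G)%g) n
  (rK : mx_representation F K n) : mx_representation F G n :=
  morphim_repr (eqg_repr rK eqK) (subxx G).

Lemma comp_repE (F : fieldType) (gT hT : finGroupType) (G : {group gT})
  (K : {group hT}) (f : {morphism G >-> hT}) (eqK : (K :==: f @* G)%g) n
  (rK : mx_representation F K n) x : comp_rep eqK rK x = rK (f x).
Proof. by []. Qed.

Lemma comp_rep_fai (F : fieldType) (gT hT : finGroupType) (G : {group gT})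
  (K : {group hT}) (f : {morphism G >-> hT}) (eqK : (K :==: f @* G)%g) n
  (rK : mx_representation F K n) :
  ('injm f)%g -> faithful_abs_irr rK -> faithful_abs_irr (comp_rep eqK rK).
Proof.
move=> injf /andP[fK aK]; apply/andP; split.
  rewrite /mx_faithful rker_morphim rker_eqg.
  apply: subset_trans (subsetIr _ _) _; apply: subset_trans injf.
  exact: morphpreS.
by rewrite morphim_mx_abs_irr eqg_mx_abs_irr.
Qed.

Lemma autm_eq (gT : finGroupType) (G : {group gT}) (a : {perm gT})
  (Aa : a \in Aut G) : (G :==: autm Aa @* G)%g.
Proof. by rewrite im_autm. Qed.

Definition arep (F : fieldType) (gT : finGroupType) (G : {group gT}) n
  (rG : mx_representation F G n) (a : {perm gT}) (Aa : a \in Aut G) :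
  mx_representation F G n := comp_rep (autm_eq Aa) rG.

Lemma arepE (F : fieldType) (gT : finGroupType) (G : {group gT}) n
  (rG : mx_representation F G n) (a : {perm gT}) (Aa : a \in Aut G) x :
  arep rG Aa x = rG (a x).
Proof.
rewrite /arep comp_repE; congr (rG _); exact: (congr1 (fun f : gT -> gT => f x) (autmE Aa)). Qed.

Lemma inn_mem (gT : finGroupType) (G : {group gT}) g :
  g \in G -> conj_aut G g \in Inn G.
Proof. by move=> Gg; rewrite /Inn mem_morphim // (subsetP (normG G)). Qed.

Lemma inn_aut (gT : finGroupType) (G : {group gT}) g :
  g \in G -> conj_aut G g \in Aut G.
Proof. by move=> Gg; apply: (subsetP (Aut_conj_aut G G)); apply: inn_mem. Qed.

Lemma key_rsim (F : fieldType) (gT : finGroupType) (G : {group gT}) n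
  (rG : mx_representation F G n) (a b : {perm gT}) (Aa : a \in Aut G)
  (Ab : b \in Aut G) :
  mx_faithful rG -> self_normalizing_mod_scalars rG ->
  mx_rsim (arep rG Aa) (arep rG Ab) ->
  exists2 g, g \in G & b = (a * conj_aut G g)%g.
Proof.
move=> faith sn [B _ freeB hom].
rewrite row_free_unit in freeB.
have hom' x : x \in G -> rG (a x) *m B = B *m rG (b x).
  by move=> Gx; have := hom x Gx; rewrite !arepE.
have hP : forall A, in_image rG A <-> in_image rG (invmx B *m A *m B).
  move=> A; split.
    case=> z Gz ->; exists (b ((a^-1)%g z)).
      by apply: Aut_closed => //; apply: Aut_closed => //; rewrite groupV.
    have Gx : (a^-1)%g z \in G by apply: Aut_closed => //; rewrite groupV.
    by rewrite -{1}(permKV a z) -mulmxA hom' // mulKmx.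
  case=> z Gz hz; exists (a ((b^-1)%g z)).
    by apply: Aut_closed => //; apply: Aut_closed => //; rewrite groupV.
  have Gbz : (b^-1)%g z \in G by apply: Aut_closed => //; rewrite groupV.
  have := hom' _ Gbz; rewrite permKV -hz !mulmxA mulmxV // mul1mx => h.
  by rewrite -(mulmxK freeB A) -h mulmxK.
have [g Gg [c c0 defB]] := sn B freeB hP.
exists g => //.
apply: (eq_Aut Ab); first by rewrite groupM // inn_aut.
move=> x Gx; rewrite permM conj_autE //; last exact: Aut_closed.
have Gax : a x \in G by exact: Aut_closed.
have Gbx : b x \in G by exact: Aut_closed.
have := hom' x Gx; rewrite defB mulmxA mul_mx_scalar -mulmxA mul_scalar_mx.
rewrite -scalemxAr => /(congr1 ( *:%R c^-1)); rewrite !scalerA mulVf // !scale1r.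
rewrite -!repr_mxM // => /(mx_faithful_inj faith); rewrite ?groupM // => h.
by rewrite conjgE h // mulKg.
Qed.

Theorem corollary11p2 (F : fieldType) (n : nat) (gT : finGroupType) (G : {group gT})
  (rG : mx_representation F G n) :
  faithful_abs_irr rG ->
  self_normalizing_mod_scalars rG ->
  num_faithful_abs_irr_classes F G n (out_order G) ->
  forall (hT : finGroupType) (H : {group hT}) (rH : mx_representation F H n),
    faithful_abs_irr rH -> (H \isog G)%g ->
    exists2 P : 'M[F]_n, P \in unitmx &
      forall A : 'M[F]_n, in_image rH A <-> in_image rG (invmx P *m A *m P).
Proof.
move=> fG sn [reps [repsF repsI repsC]] hT H rH fH isoHG.
have /andP[faithG _] := fG.
rewrite isog_sym in isoHG; case/isogP: isoHG => f injf imf.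
have eqH : (H :==: f @* G)%g by rewrite imf.
pose rHG := comp_rep eqH rH.
have [i rsim_i] := repsC rHG (comp_rep_fai eqH injf fH).
pose pr j := [pick a | decb (exists Aa : a \in Aut G, mx_rsim (reps j) (arep rG Aa))].
pose psi j := if pr j is Some a then (a *: Inn G)%g else set0.
have sub : (lcosets (Inn G) (Aut G) \subset psi @: setT)%g.
  apply/subsetP => C /lcosetsP [a Aa ->].
  have fa : faithful_abs_irr (arep rG Aa).
    exact: (comp_rep_fai (autm_eq Aa) (injm_autm Aa) fG).
  have [j sj] := repsC _ fa.
  apply/imsetP; exists j => //; rewrite /psi /pr.
  case: pickP => [b | none].
    move/decbP => [Ab sb].
    have := mx_rsim_trans sj sb; case/(key_rsim faithG sn) => g Gg ->.
    by rewrite lcosetM (lcoset_id (inn_mem Gg)).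
  have := none a; rewrite (introT (decbP _)) //; exists Aa; exact: mx_rsim_sym.
have [b Hb] : exists b, pr i = Some b.
  case Hi : (pr i) => [b|]; first by exists b.
  have s0 : set0 \in psi @: setT by apply/imsetP; exists i => //; rewrite /psi Hi.
  have n0 : set0 \notin lcosets (Inn G) (Aut G).
    apply/negP => /lcosetsP [x _ h].
    have : x \in (x *: Inn G)%g by rewrite /Inn lcoset_refl.
    by rewrite -h inE.
  have c1 : (#|set0 |: lcosets (Inn G) (Aut G)| <= #|psi @: setT|)%N.
    by apply: subset_leq_card; rewrite subUset sub1set s0 sub.
  have c2 : (#|psi @: setT| <= out_order G)%N.
    by have := leq_imset_card psi setT; rewrite cardsT card_ord.
  move: (leq_trans c1 c2); rewrite cardsU1 n0 card_lcosets /out_order ltnn.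
  by [].
have := Hb; rewrite /pr; case: pickP => // b' /decbP [Ab sb] [eb].
subst b'.
have [B _ freeB hom] := mx_rsim_trans rsim_i sb.
rewrite row_free_unit in freeB.
have hom' x : x \in G -> rH (f x) *m B = B *m rG (b x).
  by move=> Gx; have := hom x Gx; rewrite arepE comp_repE.
exists B => // A; split.
  case=> h Hh ->; rewrite -imf in Hh; case/morphimP: Hh => x _ Gx ->.
  exists (b x); first exact: Aut_closed.
  by rewrite -mulmxA hom' // mulKmx.
case=> z Gz hz.
have Gx : (b^-1)%g z \in G by apply: Aut_closed => //; rewrite groupV.
exists (f ((b^-1)%g z)); first by rewrite -imf mem_morphim.
have := hom' _ Gx; rewrite permKV -hz !mulmxA mulmxV // mul1mx => h.
by rewrite -(mulmxK freeB A) -h mulmxK.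
Qed.
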